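(* Let $k_1,k_2,k_1',k_2'\ge0$ be integers. Then (i) $(1+t)^{k_1}(1-t)^{k_2}\doteq1$ if and only if $k_1=k_2=0$; (ii) $(1+t)^{k_1}(1-t)^{k_2}\doteq(1+t)^{k_1'}(1-t)^{k_2'}$ if and only if $k_1=k_1'$ and $k_2=k_2'$.
   Context: Let $I_t$ be the ideal of $\mathbb Z[t^{\pm1/2}]$ generated by $\frac{t^5+1}{t+1}=t^4-t^3+t^2-t+1$. For $f,g\in\mathbb Z[t^{\pm1/2}]$ write $f\doteq g$ if $f\equiv\pm t^{i/2}g\pmod{I_t}$ for some sign and some integer $i$. *)

(* Defs.v *)
(* Model: Z[t^{±1/2}] = Z[s^{±1}] with s = t^{1/2}, realised inside the
   fraction field K = Frac(Z[s]) as the subring of elements p / s^n. *)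
From HB Require Import structures.
From mathcomp Require Import all_boot all_order all_algebra.
Set Implicit Arguments. Unset Strict Implicit. Unset Printing Implicit Defensive.
Import Order.TTheory GRing.Theory Num.Theory.
Local Open Scope ring_scope.

Definition K := {fraction {poly int}}.

Definition s : K := tofrac ('X : {poly int}).
Definition t : K := s ^+ 2.

Definition inLaurent (x : K) : Prop :=
  exists (p : {poly int}) (n : nat), x = tofrac p / s ^+ n.

(* generator of I_t : (t^5+1)/(t+1) = t^4 - t^3 + t^2 - t + 1 *)
Definition Phi10 : K := t ^+ 4 - t ^+ 3 + t ^+ 2 - t + 1.

Definition inI (x : K) : Prop :=
  exists h : K, inLaurent h /\ x = h * Phi10.

Definition doteq (f g : K) : Prop :=
  exists (b : bool) (i : int), inI (f - (-1) ^+ b * s ^ i * g).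

Definition P (k1 k2 : nat) : K := (1 + t) ^+ k1 * (1 - t) ^+ k2.

(* Main.v *)
Require Import Defs.
From HB Require Import structures.
From mathcomp Require Import all_boot all_order all_algebra all_field.
From mathcomp Require Import ring.
Set Warnings "-notation-overridden,-ambiguous-paths".
Set Implicit Arguments. Unset Strict Implicit. Unset Printing Implicit Defensive.
Import Order.TTheory GRing.Theory Num.Theory.
Local Open Scope ring_scope.

Definition PP (a b : nat) : {poly int} := (1 + 'X^2) ^+ a * (1 - 'X^2) ^+ b.
Definition Phip : {poly int} := 'X^8 - 'X^6 + 'X^4 - 'X^2 + 1.

Lemma PP_frac a b : tofrac (PP a b) = P a b.
Proof.
by rewrite /PP /P /t /s rmorphM !rmorphXn rmorphD rmorphB rmorph1 rmorphXn.
Qed.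

Lemma Phip_frac : tofrac Phip = Phi10.
Proof.
by rewrite /Phip /Phi10 /t /s !(rmorphD, rmorphB, rmorphN, rmorphXn, rmorph1) -!exprM.
Qed.

Lemma frac_form a b a' b' c N M :
  tofrac ('X^N * PP a b - (-1) ^+ c * 'X^M * PP a' b') =
  s ^+ N * P a b - (-1) ^+ c * s ^+ M * P a' b'.
Proof.
by rewrite /PP /P /t /s !(rmorphB, rmorphM, rmorph_sign, rmorphXn, rmorphD, rmorph1).
Qed.

Lemma frac_form2 q : tofrac (q * Phip) = tofrac q * Phi10.
Proof. rewrite rmorphM; congr (_ * _); exact: Phip_frac. Qed.

Lemma s_neq0 : s != 0.
Proof. by rewrite /s tofrac_eq0 polyX_eq0. Qed.



Lemma G1 (F : fieldType) (y x A B e q Ph : F) : y != 0 ->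
  A - e * x * B = q / y * Ph -> y * A - e * (y * x) * B = q * Ph.
Proof.
move=> yn E.
have -> : q * Ph = y * (q / y * Ph) by field.
by rewrite -E; ring.
Qed.

Lemma G2 (F : fieldType) (y x A B e q Ph : F) : x != 0 -> y != 0 ->
  A - e * x^-1 * B = q / y * Ph -> (y * x) * A - e * y * B = q * x * Ph.
Proof.
move=> xn yn E.
have -> : q * x * Ph = (y * x) * (q / y * Ph) by field.
by rewrite -E; field.
Qed.

Lemma frac_form3 q k : tofrac (q * 'X ^+ k * Phip) = tofrac q * s ^+ k * Phi10.
Proof. by rewrite !rmorphM rmorphXn; congr (_ * _); exact: Phip_frac. Qed.

Lemma to_poly a b a' b' : doteq (P a b) (P a' b') ->
  exists (c : bool) (N M : nat) (q : {poly int}),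
    'X^N * PP a b - (-1) ^+ c * 'X^M * PP a' b' = q * Phip.
Proof.
move=> [c [i [h [[p [n ->]] E]]]].
have sn := s_neq0.
have snn : forall k, s ^+ k != 0 by move=> k; rewrite expf_neq0.
case: i E => m E.
- exists c, n, (n + m)%N, p; apply/eqP; rewrite -tofrac_eq; apply/eqP.
  rewrite frac_form frac_form2 exprD.
  exact: (G1 (snn n) E).
- exists c, (n + m.+1)%N, n, (p * 'X ^+ m.+1); apply/eqP; rewrite -tofrac_eq; apply/eqP.
  rewrite frac_form frac_form3 exprD.
  exact: (G2 (snn m.+1) (snn n) E).
Qed.

Lemma eval_eq (z : algC) a b a' b' (c : bool) N M q :
  'X^N * PP a b - (-1) ^+ c * 'X^M * PP a' b' = q * Phip ->
  z ^+ 8 - z ^+ 6 + z ^+ 4 - z ^+ 2 + 1 = 0 ->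
  z ^+ N * ((1 + z ^+ 2) ^+ a * (1 - z ^+ 2) ^+ b) =
  (-1) ^+ c * z ^+ M * ((1 + z ^+ 2) ^+ a' * (1 - z ^+ 2) ^+ b').
Proof.
move=> /(congr1 (fun p => (map_poly (intr : int -> algC) p).[z])).
have mX : (map_poly (intr : int -> algC) 'X).[z] = z by rewrite map_polyX hornerX.
rewrite /PP /Phip !(rmorphB, rmorphM, rmorphD, rmorphXn, rmorph1, rmorph_sign).
have h1 : (1 : {poly algC}).[z] = 1 by rewrite -polyC1 hornerC.
rewrite !(hornerD, hornerN, hornerM, horner_exp, h1, mX).
move=> E Z. rewrite Z mulr0 in E.
by apply/eqP; rewrite -subr_eq0 E.
Qed.

Lemma sq_norm (x : algC) k : (`|x| ^+ k) ^+ 2 = (x * x^*) ^+ k.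
Proof. by rewrite -exprM mulnC exprM normCK. Qed.

Lemma conj_plus (w : algC) : w * w^* = 1 -> (1 + w) * (1 + w)^* = 2 + (w + w^*).
Proof.
move=> H; rewrite rmorphD rmorph1.
transitivity (1 + w + w^* + w * w^*); first ring.
by rewrite H; ring.
Qed.

Lemma conj_minus (w : algC) : w * w^* = 1 -> (1 - w) * (1 - w)^* = 2 - (w + w^*).
Proof.
move=> H; rewrite rmorphB rmorph1.
transitivity (1 - w - w^* + w * w^*); first ring.
by rewrite H; ring.
Qed.

Lemma norm_eq (z : algC) a b a' b' (c : bool) N M : `|z| = 1 ->
  z ^+ N * ((1 + z ^+ 2) ^+ a * (1 - z ^+ 2) ^+ b) =
  (-1) ^+ c * z ^+ M * ((1 + z ^+ 2) ^+ a' * (1 - z ^+ 2) ^+ b') ->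
  (2 + (z ^+ 2 + (z ^+ 2)^*)) ^+ a * (2 - (z ^+ 2 + (z ^+ 2)^*)) ^+ b =
  (2 + (z ^+ 2 + (z ^+ 2)^*)) ^+ a' * (2 - (z ^+ 2 + (z ^+ 2)^*)) ^+ b'.
Proof.
move=> nz /(congr1 (fun v => `|v| ^+ 2)).
rewrite !normrM !normrX normrN1 nz !expr1n !mul1r !exprMn !sq_norm.
have ww : z ^+ 2 * (z ^+ 2)^* = 1.
  by rewrite -normCK normrX nz !expr1n.
by rewrite !conj_plus ?rmorphN ?mulrNN // -!opprD.
Qed.

Lemma pow_ne (x : algC) m n : x \is Num.real -> x != 0 -> x ^+ 2 = 3 * x - 1 ->
  (m < n)%N -> x ^+ m = x ^+ n -> False.
Proof.
move=> xr xn x2 mn E.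
have E1 : x ^+ (n - m) = 1.
  apply: (mulfI (expf_neq0 m xn)); rewrite -exprD subnKC ?mulr1 //.
  exact: ltnW.
have nx : `|x| = 1.
  apply/eqP; rewrite -(@pexpr_eq1 _ _ (n - m)) ?subn_gt0 // -normrX E1 normr1 //.
have x21 : x ^+ 2 = 1 by rewrite -real_normK // nx expr1n.
have h3 : 3 * x = 2.
  have : 3 * x - 1 = 1 by rewrite -x2.
  move/(congr1 (fun v => v + 1)); rewrite subrK => ->; ring.
have h9 : (9 : algC) = 4.
  transitivity (9 * x ^+ 2); first by rewrite x21 mulr1.
  transitivity ((3 * x) ^+ 2); first ring.
  by rewrite h3; ring.
by move/eqP: h9; rewrite (eqr_nat algC 9 4).
Qed.

Lemma final (u : algC) a b a' b' : u \is Num.real -> u ^+ 2 = u + 1 ->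
  (2 + u) ^+ a * (2 - u) ^+ b = (2 + u) ^+ a' * (2 - u) ^+ b' ->
  (2 + (1 - u)) ^+ a * (2 - (1 - u)) ^+ b = (2 + (1 - u)) ^+ a' * (2 - (1 - u)) ^+ b' ->
  a = a' /\ b = b'.
Proof.
move=> ur u2 E1 E2.
have h5 : (2 + u) * (2 + (1 - u)) = 5.
  transitivity (6 + u - u ^+ 2); first ring.
  by rewrite u2; ring.
have h1 : (2 - u) * (2 - (1 - u)) = 1.
  transitivity (2 + u - u ^+ 2); first ring.
  by rewrite u2; ring.
have E3 : ((2 + u) * (2 + (1 - u))) ^+ a * ((2 - u) * (2 - (1 - u))) ^+ b =
  ((2 + u) * (2 + (1 - u))) ^+ a' * ((2 - u) * (2 - (1 - u))) ^+ b'.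
  by rewrite !exprMn mulrACA E1 E2 mulrACA.
rewrite h5 h1 !expr1n !mulr1 in E3.
have aa : a = a'.
  apply/eqP; rewrite -(@eqn_exp2l 5) // -(eqr_nat algC) !natrX.
  by apply/eqP.
subst a'; split => //.
have un : 2 + u != 0.
  by apply/eqP => h; move: h5; rewrite h mul0r => /eqP; rewrite eq_sym (eqr_nat algC 5 0).
have xn : 2 - u != 0.
  by apply/eqP => h; move: h1; rewrite h mul0r => /eqP; rewrite eq_sym oner_eq0.
have E4 : (2 - u) ^+ b = (2 - u) ^+ b' := mulfI (expf_neq0 a un) E1.
have xr : 2 - u \is Num.real by rewrite rpredB // rpred_nat.
have x2 : (2 - u) ^+ 2 = 3 * (2 - u) - 1.
  transitivity (4 - 4 * u + u ^+ 2); first ring.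
  by rewrite u2; ring.
case: (ltngtP b b') => // h.
- by case: (pow_ne xr xn x2 h E4).
- by case: (pow_ne xr xn x2 h (esym E4)).
Qed.

Lemma Phi_cube (x : algC) : x ^+ 4 - x ^+ 3 + x ^+ 2 - x + 1 = 0 ->
  (x ^+ 3) ^+ 4 - (x ^+ 3) ^+ 3 + (x ^+ 3) ^+ 2 - x ^+ 3 + 1 = 0.
Proof.
move=> H.
transitivity ((x ^+ 4 - x ^+ 3 + x ^+ 2 - x + 1) *
  (1 + (x + 1) * (x ^+ 7 - x ^+ 4 - x ^+ 2 + x))); first ring.
by rewrite H mul0r.
Qed.

Lemma z8 (z : algC) : z ^+ 8 - z ^+ 6 + z ^+ 4 - z ^+ 2 + 1 =
  (z ^+ 2) ^+ 4 - (z ^+ 2) ^+ 3 + (z ^+ 2) ^+ 2 - z ^+ 2 + 1.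
Proof. by rewrite -!exprM. Qed.

Lemma alg_main a b a' b' (c : bool) N M q :
  'X^N * PP a b - (-1) ^+ c * 'X^M * PP a' b' = q * Phip -> a = a' /\ b = b'.
Proof.
move=> Hq.
have [w Hw] : exists w : algC, w ^+ 4 - w ^+ 3 + w ^+ 2 - w + 1 = 0.
  have [x Dx] := @solve_monicpoly algC 4 (nth 0 [:: -1; 1; -1; 1]) isT.
  exists x; rewrite Dx !big_ord_recl big_ord0 /=.
  ring.
have w5 : w ^+ 5 = -1.
  apply/eqP; rewrite -subr_eq0 opprK.
  have -> : w ^+ 5 + 1 = (w + 1) * (w ^+ 4 - w ^+ 3 + w ^+ 2 - w + 1) by ring.
  by rewrite Hw mulr0.
have nw : `|w| = 1.
  apply/eqP; rewrite -(@pexpr_eq1 _ _ 5) // -normrX w5 normrN1 //.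
set z := sqrtC w.
have zw : z ^+ 2 = w by exact: sqrtCK.
have nz : `|z| = 1.
  apply/eqP; rewrite -(@pexpr_eq1 _ _ 2) // -normrX zw nw //.
have nz3 : `|z ^+ 3| = 1 by rewrite normrX nz expr1n.
have wn : w != 0 by apply/eqP => h; move: nw; rewrite h normr0 => /eqP; rewrite eq_sym oner_eq0.
have wc : w^* = w^-1.
  have ww : w * w^* = 1 by rewrite -normCK nw expr1n.
  by rewrite -[w^*](mulKf wn) ww mulr1.
have Z1 : z ^+ 8 - z ^+ 6 + z ^+ 4 - z ^+ 2 + 1 = 0 by rewrite z8 zw.
have Z3 : (z ^+ 3) ^+ 8 - (z ^+ 3) ^+ 6 + (z ^+ 3) ^+ 4 - (z ^+ 3) ^+ 2 + 1 = 0.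
  by rewrite z8 [(z ^+ 3) ^+ 2]exprAC zw; exact: Phi_cube.
have E1' := norm_eq nz (@eval_eq z _ _ _ _ _ _ _ _ Hq Z1).
have E2' := norm_eq nz3 (@eval_eq (z ^+ 3) _ _ _ _ _ _ _ _ Hq Z3).
rewrite zw in E1'.
rewrite [(z ^+ 3) ^+ 2]exprAC zw in E2'.
have wc3 : (w ^+ 3)^* = (w^-1) ^+ 3 by rewrite -wc; exact: rmorphXn.
rewrite wc3 in E2'.
rewrite wc in E1'.
set u := w + w^-1 in E1'.
have u3 : w ^+ 3 + w^-1 ^+ 3 = 1 - u.
  apply/eqP; rewrite -subr_eq0; apply/eqP.
  transitivity (w ^- 3 * (w ^+ 2 + w + 1) * (w ^+ 4 - w ^+ 3 + w ^+ 2 - w + 1)).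
    by rewrite /u; field.
  by rewrite Hw mulr0.
rewrite u3 in E2'.
apply: (final _ _ E1' E2').
- have hc : (w + w^*)^* = w^* + w^*^* by exact: rmorphD.
  by rewrite CrealE /u -wc hc conjCK addrC.
- apply/eqP; rewrite -subr_eq0; apply/eqP.
  transitivity (w ^- 2 * (w ^+ 4 - w ^+ 3 + w ^+ 2 - w + 1)).
    by rewrite /u; field.
  by rewrite Hw mulr0.
Qed.

Lemma main2 a b a' b' : doteq (P a b) (P a' b') <-> a = a' /\ b = b'.
Proof.
split.
  by move/to_poly => [c [N [M [q Hq]]]]; exact: alg_main Hq.
case=> <- <-; exists false, 0; exists 0; split.
  by exists 0, 0%N; rewrite mul0r.
by rewrite expr0 mul1r expr0z mul1r subrr mul0r.
Qed.

Local Close Scope ring_scope.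

Theorem lemma6p1 (k1 k2 k1' k2' : nat) :
  (doteq (P k1 k2) 1%R <-> (k1 = 0 /\ k2 = 0)) /\
  (doteq (P k1 k2) (P k1' k2') <-> (k1 = k1' /\ k2 = k2')).
Proof.
split; last exact: main2.
rewrite [X in doteq _ X](_ : 1%R = P 0 0); first exact: main2.
by rewrite /P !expr0 mulr1.
Qed.
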